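(* Let $(X,\mathcal{B},\mu,T)$ be a rigid measure preserving system (with $\mu$ $\sigma$-finite on a standard space). Then every quasi-factor of $(X,\mathcal{B},\mu,T)$ is rigid.
   Context: A measure preserving system $(X,\mathcal{B},\mu,T)$ is rigid if there is a strictly increasing sequence $(n_k)_{k\ge0}$ of integers such that $T^{n_k}f\to f$ in $L^2(\mu)$ for all $f\in L^2(\mu)$ (equivalently, $\mu(T^{-n_k}A\triangle A)\to0$ for all $A\in\mathcal{B}$ of finite measure). $X^*$ denotes the set of all measures on $(X,\mathcal{B})$, with $\sigma$-algebra $\mathcal{B}^*$ generated by the sets $\{\gamma:\gamma(B)\in[a,b]\}$, $B\in\mathcal{B}$, $0\le a\le b\le\infty$, and $T_*\gamma=\gamma\circ T^{-1}$. A quasi-factor of $(X,\mathcal{B},\mu,T)$ is a probability preserving system $(X^*,\mathcal{B}^*,\xi,T_* )$ where $\xi$ is a $T_*$-invariant probability on $X^*$ with barycenter $\mu$, i.e. $\int f\,d\mu=\int\big(\int f\,d\gamma\big)d\xi(\gamma)$ for all $f\in L^1(\mu)$. *)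

(* Defs.v *)
From HB Require Import structures.
From mathcomp Require Import all_boot all_order all_algebra.
From mathcomp Require Import all_classical all_reals all_analysis.
Set Implicit Arguments. Unset Strict Implicit. Unset Printing Implicit Defensive.
Import Order.TTheory GRing.Theory Num.Theory.
Local Open Scope classical_set_scope.
Local Open Scope ring_scope.

Definition standard_borel d (X : measurableType d) (R : realType) : Prop :=
  exists (B : set R) (f : X -> R),
    [/\ measurable B, measurable_fun [set: X] f, injective f,
        f @` [set: X] = B & forall A, measurable A -> measurable (f @` A)].

Definition measure_preserving d (X : measurableType d) (R : realType)
  (mu : {measure set X -> \bar R}) (T : X -> X) : Prop :=
  measurable_fun [set: X] T /\ forall A, measurable A -> mu (T @^-1` A) = mu A.

Definition rigid d (Y : measurableType d) (R : realType)
  (m : set Y -> \bar R) (S : Y -> Y) : Prop :=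
  exists n : nat -> nat, (forall k, (n k < n k.+1)%N) /\
    forall A, measurable A -> (m A < +oo)%E ->
      (fun k => m ((iter (n k) S) @^-1` A `+` A)) @ \oo --> 0%E.

Definition meas_type d (X : measurableType d) (R : realType) :=
  {measure set X -> \bar R}.
HB.instance Definition _ d (X : measurableType d) (R : realType) :=
  gen_eqMixin (meas_type X R).
HB.instance Definition _ d (X : measurableType d) (R : realType) :=
  gen_choiceMixin (meas_type X R).
HB.instance Definition _ d (X : measurableType d) (R : realType) :=
  isPointed.Build (meas_type X R) mzero.

Definition Bstar_gen d (X : measurableType d) (R : realType)
  : set (set (meas_type X R)) :=
  fun S => exists (B : set X) (a b : \bar R),
    [/\ measurable B, (0 <= a)%E, (a <= b)%E &
        S = [set g : meas_type X R | (a <= g B <= b)%E]].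

Definition Xstar d (X : measurableType d) (R : realType)
  : measurableType (@Bstar_gen d X R).-sigma :=
  g_sigma_algebraType (@Bstar_gen d X R).

Definition Tstar d (X : measurableType d) (R : realType) (T : X -> X)
  (mT : measurable_fun [set: X] T) (g : Xstar X R) : Xstar X R :=
  measure_function_pushforward__canonical__measure_function_Measure g mT.

(* xi is a quasi-factor: T_*-invariant probability on X^* with barycenter mu *)
Definition quasi_factor d (X : measurableType d) (R : realType)
  (mu : {measure set X -> \bar R}) (T : X -> X)
  (mT : measurable_fun [set: X] T) (xi : probability (Xstar X R) R) : Prop :=
  (forall E : set (Xstar X R), measurable E ->
      xi (Tstar mT @^-1` E) = xi E) /\
  (forall f : X -> R, mu.-integrable [set: X] (EFin \o f) ->
      (\int[mu]_x (f x)%:E =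
       \int[xi]_(g in [set: Xstar X R]) \int[(g : meas_type X R)]_x (f x)%:E)%E).

(* Main.v *)
Require Import Defs.
From HB Require Import structures.
From mathcomp Require Import all_boot all_order all_algebra.
From mathcomp Require Import all_classical all_reals all_analysis.
From mathcomp Require Import ring lra.
From mathcomp Require Import measurable_realfun.
Set Implicit Arguments. Unset Strict Implicit. Unset Printing Implicit Defensive.
Import Order.TTheory GRing.Theory Num.Theory.
Local Open Scope classical_set_scope.
Local Open Scope ring_scope.

Lemma cvge0_eps (R : realType) (u : nat -> \bar R) : (forall k, (0 <= u k)%E) ->
  (forall e : R, 0 < e -> \forall k \near \oo, (u k <= e%:E)%E) -> u @ \oo --> 0%E.
Proof.
move=> u0 h; apply/fine_cvgP; split.
  have := h 1 ltr01; apply: filterS => k uk.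
  by rewrite ge0_fin_numE // (le_lt_trans uk) ?ltry.
apply/cvgrPdist_le => e e0; have := h e e0; apply: filterS => k /=.
have := u0 k; case: (u k) => [r| |] //= r0 rk.
by rewrite sub0r normrN ger0_norm // -lee_fin.
Qed.

Lemma cvge0_epsP (R : realType) (u : nat -> \bar R) : u @ \oo --> 0%E ->
  (forall e : R, 0 < e -> \forall k \near \oo, (u k <= e%:E)%E).
Proof.
move/fine_cvgP => [fu cu] e e0.
move/cvgrPdist_le: cu => /(_ e e0) cu.
near=> k.
have fk : u k \is a fin_num by near: k.
rewrite -(fineK fk) lee_fin.
have : `|0 - fine (u k)| <= e by near: k; exact: cu.
apply: le_trans; rewrite sub0r normrN; exact: ler_norm.
Unshelve. all: by end_near.
Qed.

Lemma bigcup_ltS (T0 : Type) (F : nat -> set T0) N :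
  \bigcup_(i in [set j | (j < N.+1)%N]) F i =
  \bigcup_(i in [set j | (j < N)%N]) F i `|` F N.
Proof.
apply/seteqP; split => x.
  move=> [i /= iN Fx]; have [iN'|iN'] := ltnP i N.
    by left; exists i.
  have iN2 : i = N by apply/eqP; rewrite eqn_leq iN'; rewrite ltnS in iN; rewrite iN.
  by right; rewrite -iN2.
move=> [[i /= iN Fx]|Fx]; first by exists i => //=; exact: ltnW.
by exists N => //=.
Qed.

Section QF.
Variables (R : realType) (d : measure_display) (X : measurableType d).
Variables (mu : {measure set X -> \bar R}) (T : X -> X).
Hypothesis mT : measurable_fun [set: X] T.
Variable xi : probability (Xstar X R) R.
Hypothesis hqf : quasi_factor mu mT xi.

Local Notation XS := (Xstar X R).
Local Notation S := (Tstar mT).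

Definition ev (g : XS) (B : set X) : \bar R := (g : meas_type X R) B.

Lemma ev_ge0 g B : (0 <= ev g B)%E.
Proof. exact: measure_ge0. Qed.

Lemma ev_iter n g B : ev (iter n S g) B = ev g ((iter n T) @^-1` B).
Proof.
elim: n g B => [//|n IH] g B.
by rewrite iterS; exact: (IH g (T @^-1` B)).
Qed.

Lemma measurable_iterT n : measurable_fun [set: X] (iter n T).
Proof.
elim: n => [|n IH] /=; first exact: measurable_id.
exact: (measurableT_comp mT IH).
Qed.

Lemma measurable_preT n B : measurable B -> measurable ((iter n T) @^-1` B).
Proof. move=> mB; rewrite -[_ @^-1` _]setTI; exact: measurable_iterT. Qed.

Lemma mS : measurable_fun [set: XS] S.
Proof.
have h : (@measurable _ XS) = <<s @Bstar_gen d X R >> by [].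
apply: (measurability _ h).
move=> _ [E [B [a [b [mB a0 ab ->]]]] <-].
rewrite setTI; apply: sub_sigma_algebra.
exists (T @^-1` B), a, b; split => //.
  by rewrite -[_ @^-1` _]setTI; exact: mT.
Qed.


Lemma measurable_iterS n : measurable_fun [set: XS] (iter n S).
Proof.
elim: n => [|n IH] /=; first exact: measurable_id.
exact: (measurableT_comp mS IH).
Qed.

Lemma measurable_preS n (E : set XS) : measurable E -> measurable ((iter n S) @^-1` E).
Proof. move=> mE; rewrite -[_ @^-1` _]setTI; exact: measurable_iterS. Qed.

Lemma xi_iter n (E : set XS) : measurable E -> xi ((iter n S) @^-1` E) = xi E.
Proof.
elim: n E => [//|n IH] E mE.
have -> : (iter n.+1 S) @^-1` E = (iter n S) @^-1` (S @^-1` E) by [].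
have mSE : measurable (S @^-1` E) by rewrite -[_ @^-1` _]setTI; exact: mS.
by rewrite IH // (proj1 hqf).
Qed.

Lemma xi_le1 (E : set XS) : measurable E -> (xi E <= 1)%E.
Proof. exact: probability_le1. Qed.

Variable nk : nat -> nat.

Definition sd k (E : set XS) := (iter (nk k) S) @^-1` E `+` E.

Definition good (E : set XS) := measurable E /\
  (fun k => xi (sd k E)) @ \oo --> 0%E.

Lemma msd k E : measurable E -> measurable (sd k E).
Proof.
move=> mE; rewrite /sd setY_def.
by apply: measurableU; apply: measurableD => //; exact: measurable_preS.
Qed.

Lemma goodP E : measurable E ->
  (forall e : R, 0 < e -> \forall k \near \oo, (xi (sd k E) <= e%:E)%E) -> good E.
Proof. by move=> mE h; split => //; apply: cvge0_eps => // k; exact: measure_ge0. Qed.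

Lemma good_setT : good [set: XS].
Proof.
apply: goodP => // e e0; near=> k.
have -> : sd k [set: XS] = set0.
  by apply/seteqP; split => x //=; rewrite /sd setY_def /= => -[[]|[]].
by rewrite measure0 lee_fin ltW.
Unshelve. all: by end_near.
Qed.

Lemma good_C E : good E -> good (~` E).
Proof.
move=> [mE cE]; split; first exact: measurableC.
apply: cvg_trans cE; apply: near_eq_cvg; near=> k.
congr (xi _); rewrite /sd !setY_def.
apply/seteqP; split => x /=.
  move=> [[h1 h2]|[h1 h2]].
  - by right; split => //; apply: contra_notP h2.
  - by left; split => //; apply: contra_notP h1.
move=> [[h1 h2]|[h1 h2]].
- by right; split=> //; apply: contra_notP h2.
- by left; split=> //; apply: contra_notP h1.
Unshelve. all: by end_near.
Qed.

Lemma half_gt0 (e : R) : 0 < e -> 0 < e / 2.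
Proof. by move=> e0; apply: divr_gt0. Qed.

Lemma third_gt0 (e : R) : 0 < e -> 0 < e / 3.
Proof. by move=> e0; apply: divr_gt0. Qed.

Lemma good_U A B : good A -> good B -> good (A `|` B).
Proof.
move=> [mA cA] [mB cB]; apply: goodP; first exact: measurableU.
move=> e e0.
have hA := cvge0_epsP cA (half_gt0 e0).
have hB := cvge0_epsP cB (half_gt0 e0).
near=> k.
apply: (@le_trans _ _ (xi (sd k A `|` sd k B))).
  apply: le_measure; rewrite ?inE.
  - by apply: msd; exact: measurableU.
  - by apply: measurableU; exact: msd.
  move=> x; rewrite /sd !setY_def /=.
  move=> [[[pA|pB] nAB]|[[a|b] nP]].
  - by left; left; split=> // ?; apply: nAB; left.
  - by right; left; split=> // ?; apply: nAB; right.
  - by left; right; split=> // ?; apply: nP; left.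
  - by right; right; split=> // ?; apply: nP; right.
apply: le_trans (measureU2 _ (msd _ mA) (msd _ mB)) _.
rewrite [leRHS](_ : _ = (e / 2)%:E + (e / 2)%:E); last by rewrite -EFinD -splitr.
apply: leeD; near: k; [exact: hA|exact: hB].
Unshelve. all: by end_near.
Qed.

Lemma good_set0 : good set0.
Proof. rewrite -setCT; exact: good_C good_setT. Qed.

Lemma good_bigcup (F : (set XS)^nat) : (forall i, good (F i)) ->
  good (\bigcup_i F i).
Proof.
move=> gF.
set U := \bigcup_i F i.
pose V N := \bigcup_(i in [set j | (j < N)%N]) F i.
have mF i : measurable (F i) by case: (gF i).
have mU : measurable U by exact: bigcupT_measurable.
have mV N : measurable (V N).
  by apply: bigcup_measurable => i _; exact: mF.
have VU N : V N `<=` U by move=> x [i _ Fx]; exists i.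
have gV N : good (V N).
  elim: N => [|N IH].
    have -> : V 0%N = set0 by apply/seteqP; split => x // [].
    exact: good_set0.
  have -> : V N.+1 = V N `|` F N.
    apply/seteqP; split => x.
      move=> [i /= iN Fx]; have [iN'|iN'] := ltnP i N.
        by left; exists i.
      have iN2 : i = N by apply/eqP; rewrite eqn_leq iN'; rewrite ltnS in iN; rewrite iN.
      by right; rewrite -iN2.
    move=> [[i /= iN Fx]|Fx]; first by exists i => //=; exact: ltnW.
    by exists N => //=.
  exact: good_U.
pose W N := U `\` V N.
have mW N : measurable (W N) by exact: measurableD.
have W0 : (xi \o W) x @[x --> \oo] --> 0%E.
  have -> : 0%E = xi (\bigcap_n W n).
    have -> : \bigcap_n W n = set0; last by rewrite measure0.
    apply/seteqP; split => x // hx.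
    have [[i _ Fx] _] := hx 0%N I.
    have [_ nV] := hx i.+1 I; apply: nV; exists i => //=.
  apply: nonincreasing_cvg_mu => //.
  - by rewrite (le_lt_trans (xi_le1 (mW 0%N))) ?ltry.
  - exact: bigcapT_measurable.
  - move=> n m nm; apply/subsetPset => x [Ux nV]; split => // -[i /= im Fx].
    by apply: nV; exists i => //=; exact: leq_trans im nm.
apply: goodP => // e e0.
have [N _ HN] := cvge0_epsP W0 (third_gt0 e0).
have xiW : (xi (W N) <= (e / 3)%:E)%E by exact: (HN N (leqnn N)).
have hV := cvge0_epsP (proj2 (gV N)) (third_gt0 e0).
near=> k.
apply: (@le_trans _ _ (xi ((iter (nk k) S) @^-1` (W N) `|` W N `|` sd k (V N)))).
  apply: le_measure; rewrite ?inE.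
  - exact: msd.
  - apply: measurableU; last exact: msd.
    by apply: measurableU => //; exact: measurable_preS.
  move=> x; rewrite /sd !setY_def /=.
  move=> [[PU nU]|[Ux nPU]].
    have [h|h] := pselect (V N (iter (nk k) S x)).
      by right; left; split => // /VU.
    by left; left.
  have [h|h] := pselect (V N x).
    by right; right; split => // /VU.
  by left; right.
apply: le_trans (measureU2 _ _ (msd _ (mV N))) _.
  by apply: measurableU => //; exact: measurable_preS.
apply: le_trans (leeD (measureU2 _ (measurable_preS _ (mW N)) (mW N)) (lexx _)) _.
rewrite [X in (X + _ + _ <= _)%E](_ : _ = xi (W N)); last exact: (xi_iter (nk k) (mW N)).
rewrite [leRHS](_ : _ = (e / 3)%:E + (e / 3)%:E + (e / 3)%:E); last first.
  by rewrite -!EFinD; congr (_%:E); field; rewrite ?pnatr_eq0.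
apply: leeD; first exact: leeD.
by near: k; exact: hV.
Unshelve. all: by end_near.
Qed.

Lemma good_all : (forall G, @Bstar_gen d X R G -> good G) ->
  forall E : set XS, measurable E -> good E.
Proof.
move=> hG E mE.
have sg : sigma_algebra [set: XS] good.
  split.
  - exact: good_set0.
  - by move=> A gA; rewrite setTD; exact: good_C.
  - by move=> A gA; exact: good_bigcup.
exact: (smallest_sub sg hG mE).
Qed.

Lemma mev B : measurable B -> measurable_fun [set: XS] (fun g => ev g B).
Proof.
move=> mB.
apply: (measurability (measurable_realfun.ErealGenCInfty.G (R:=R))).
  exact: measurable_realfun.ErealGenCInfty.measurableE.
move=> _ [_ [r ->] <-].
have [r0|r0] := leP r 0.
  have -> : [set: XS] `&` (fun g => ev g B) @^-1` `[r%:E, +oo[%classic = [set: XS].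
    apply/seteqP; split => g // _; split => //=.
    rewrite in_itv /= andbT; apply: le_trans _ (ev_ge0 g B).
    by rewrite lee_fin.
  exact: measurableT.
apply: sub_sigma_algebra.
exists B, r%:E, +oo%E; split => //.
- by rewrite lee_fin ltW.
- exact: leey.
apply/seteqP; split => g /=.
  by move=> [_]; rewrite in_itv /= andbT => ->; rewrite leey.
by move=> /andP[h _]; split => //; rewrite in_itv /= h.
Qed.

Lemma int_ev C : measurable C -> (mu C < +oo)%E ->
  (\int[xi]_(g in [set: XS]) ev g C = mu C)%E.
Proof.
move=> mC muC.
have hint : mu.-integrable [set: X] (EFin \o (\1_C : X -> R)).
  apply/integrableP; split.
    by apply/measurable_EFinP; exact: measurable_indic.
  rewrite (@eq_integral _ _ _ _ _ (fun x => (\1_C x)%:E)); last first.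
    by move=> x _ /=; rewrite ger0_norm.
  by rewrite integral_indic // setIT.
have := (proj2 hqf) _ hint.
rewrite integral_indic // setIT => ->.
apply: eq_integral => g _.
by rewrite integral_indic // setIT.
Qed.

Lemma markov_ev C (a : R) : measurable C -> (mu C < +oo)%E -> 0 < a ->
  (a%:E * xi [set g | a%:E <= ev g C] <= mu C)%E.
Proof.
move=> mC muC a0.
have := le_integral_abse xi measurableT (mev mC) a0.
rewrite setTI.
rewrite (@eq_integral _ _ _ _ _ (fun g => ev g C)); last first.
  by move=> g _; rewrite gee0_abs // ev_ge0.
rewrite int_ev //.
have -> : [set x | (a%:E <= `|ev x C|)%E] = [set g | a%:E <= ev g C]%E; last by [].
by apply/seteqP; split => g /=; rewrite gee0_abs // ev_ge0.
Qed.

Lemma ev_le g A B : measurable A -> measurable B -> A `<=` B -> (ev g A <= ev g B)%E.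
Proof. by move=> mA mB AB; apply: le_measure; rewrite ?inE. Qed.

Lemma ev_DI g A B : measurable A -> measurable B ->
  ev g A = (ev g (A `\` B) + ev g (A `&` B))%E.
Proof. by move=> mA mB; rewrite /ev (measureDI _ mA mB). Qed.
Hypothesis hn : forall A, measurable A -> (mu A < +oo)%E ->
  (fun k => mu ((iter (nk k) T) @^-1` A `+` A)) @ \oo --> 0%E.

Lemma good_gt_fin B c : measurable B -> (mu B < +oo)%E -> 0 <= c ->
  good [set g | c%:E < ev g B]%E.
Proof.
move=> mB muB c0.
set H := [set g | c%:E < ev g B]%E.
have mH : measurable H.
  by have := emeasurable_fun_o_infty measurableT (mev mB) c%:E; rewrite setTI.
have mHg b : measurable [set g : XS | c%:E < ev g B <= b]%E.
  have := emeasurable_fun_infty_c measurableT (mev mB) b; rewrite setTI => h.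
  have -> : [set g : XS | c%:E < ev g B <= b]%E = H `&` [set g | ev g B <= b]%E.
    by apply/seteqP; split => g /=; [move/andP|move=> [-> ->]].
  exact: measurableI.
pose J m := [set g : XS | c%:E < ev g B <= (c + m.+1%:R^-1)%:E]%E.
have J0 : (xi \o J) x @[x --> \oo] --> 0%E.
  have -> : 0%E = xi (\bigcap_n J n).
    have -> : \bigcap_n J n = set0; last by rewrite measure0.
    apply/seteqP; split => g // hg.
    have /andP[h1 h2] := hg 0%N I.
    move: h1 h2; case Eg : (ev g B) => [r| |] //=.
    rewrite !lte_fin !lee_fin => cr _.
    have [m hm] := ltr_add_invr cr.
    have /andP[_] := hg m I; rewrite Eg lee_fin => h.
    by move: (lt_le_trans hm h); rewrite ltxx.
  apply: nonincreasing_cvg_mu.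
  - by rewrite (le_lt_trans (xi_le1 (mHg _))) ?ltry.
  - by move=> i; exact: mHg.
  - by apply: bigcapT_measurable => i; exact: mHg.
  - move=> n m nm; apply/subsetPset => g /andP[h1 h2]; apply/andP; split => //.
    apply: le_trans h2 _; rewrite lee_fin lerD2l lef_pV2 ?posrE ?ltr0n //.
    by rewrite ler_nat.
pose Bk k := (iter (nk k) T) @^-1` B.
have mBk k : measurable (Bk k) by exact: measurable_preT.
have mPH k : measurable (iter (nk k) S @^-1` H) by exact: measurable_preS.
have sdE k : xi (sd k H) = (xi (H `\` iter (nk k) S @^-1` H) +
                            xi (H `\` iter (nk k) S @^-1` H))%E.
  rewrite /sd setY_def measureU; first last.
  - by apply/seteqP; split => g // [[_ h1] [h2 _]]; exact: h1.
  - exact: measurableD.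
  - exact: measurableD.
  congr (_ + _)%E.
  rewrite measureD //; last by rewrite (le_lt_trans (xi_le1 (mPH k))) ?ltry.
  rewrite [in RHS]measureD //; last by rewrite (le_lt_trans (xi_le1 mH)) ?ltry.
  rewrite setIC; congr (_ - _)%E.
  exact: (xi_iter (nk k) mH).
have bnd k (dl : R) : 0 < dl ->
  (xi (H `\` iter (nk k) S @^-1` H) <=
   xi [set g : XS | c%:E < ev g B <= (c + dl)%:E] +
   xi [set g | dl%:E <= ev g (B `\` Bk k)])%E.
  move=> dl0.
  have mD : measurable [set g : XS | dl%:E <= ev g (B `\` Bk k)]%E.
    have := emeasurable_fun_c_infty measurableT (mev (measurableD mB (mBk k))) dl%:E.
    by rewrite setTI.
  apply: le_trans (measureU2 _ (mHg _) mD).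
  apply: le_measure; rewrite ?inE.
  - exact: measurableD.
  - exact: measurableU.
  move=> g /= [cg nPH]; rewrite /H /= in cg.
  have gk : (ev g (Bk k) <= c%:E)%E.
    by rewrite leNgt; apply/negP => h; apply: nPH; rewrite /H /= ev_iter.
  have [h|h] := leP (ev g B) (c + dl)%:E.
    by left; apply/andP; split.
  right.
  have heq := @ev_DI g B (Bk k) mB (mBk k).
  have mBI : measurable (B `&` Bk k) by exact: measurableI.
  have hle := @ev_le g (B `&` Bk k) (Bk k) mBI (mBk k) (@subIsetr _ _ _).
  have hy := @ev_ge0 g (B `\` Bk k); have hz := @ev_ge0 g (B `&` Bk k).
  move: (ev g (B `\` Bk k)) (ev g (B `&` Bk k)) (ev g (Bk k)) (ev g B) h gk hy hz hle heq.
  move=> [y| |] [z| |] [w| |] [v| |] //=; rewrite ?lee_fin ?lte_fin ?leey //.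
  - move=> h1 h2 h3 h4 h5 [h6].
  lra.
apply: goodP => // e e0.
have e4 : 0 < e / 4 by apply: divr_gt0.
have [N _ HN] := cvge0_epsP J0 e4.
have xiJ : (xi (J N) <= (e / 4)%:E)%E by exact: (HN N (leqnn N)).
pose dl : R := N.+1%:R^-1.
have dl0 : 0 < dl by rewrite /dl invr_gt0 ltr0n.
have ed0 : 0 < e / 4 * dl by exact: mulr_gt0.
have hB := cvge0_epsP (hn mB muB) ed0.
near=> k.
have mC : measurable (B `\` Bk k) by exact: measurableD.
have muC : (mu (B `\` Bk k) < +oo)%E.
  by apply: le_lt_trans muB; apply: le_measure; rewrite ?inE //; exact: subDsetl.
have muC2 : (mu (B `\` Bk k) <= (e / 4 * dl)%:E)%E.
  have h1 : (mu (B `\` Bk k) <= mu (Bk k `+` B))%E.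
    apply: le_measure; rewrite ?inE //.
      by rewrite setY_def; apply: measurableU; exact: measurableD.
    by move=> x [Bx nBk]; rewrite setY_def; right.
  have h2 : (mu (Bk k `+` B) <= (e / 4 * dl)%:E)%E by near: k; exact: hB.
  exact: le_trans h1 h2.
have hm := markov_ev mC muC dl0.
have key : (xi [set g | dl%:E <= ev g (B `\` Bk k)] <= (e / 4)%:E)%E.
  have hx0 : (0 <= xi [set g | dl%:E <= ev g (B `\` Bk k)])%E by exact: measure_ge0.
  move: (le_trans hm muC2) hx0.
  case: (xi [set g | dl%:E <= ev g (B `\` Bk k)]%E) => [r| |] //=.
  - rewrite !lee_fin => h _; rewrite -(ler_pM2l dl0).
    by rewrite [X in _ <= X]mulrC.
  - by rewrite mulry gtr0_sg // mul1e leNgt ltry.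
have hy : (xi (H `\` iter (nk k) S @^-1` H) <= (e / 2)%:E)%E.
  apply: le_trans (bnd k dl dl0) _.
  rewrite [leRHS](_ : _ = (e / 4)%:E + (e / 4)%:E)%E; last first.
    by rewrite -EFinD; congr (_%:E); field; rewrite ?pnatr_eq0.
  by apply: leeD => //; exact: xiJ.
rewrite sdE.
rewrite [leRHS](_ : _ = (e / 2)%:E + (e / 2)%:E)%E; last by rewrite -EFinD -splitr.
exact: leeD.
Unshelve. all: by end_near.
Qed.

Hypothesis hsf : sigma_finite [set: X] mu.

Lemma good_gt B c : measurable B -> good [set g | c%:E < ev g B]%E.
Proof.
move=> mB.
have [c0|c0] := ltP c 0.
  have -> : [set g | c%:E < ev g B]%E = [set: XS]; last exact: good_setT.
  apply/seteqP; split => g // _ /=.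
  by apply: lt_le_trans (ev_ge0 g B); rewrite lte_fin.
have [F FU hF] := hsf.
pose Y j := \bigcup_(i in [set i | (i < j)%N]) F i.
have mY j : measurable (Y j) by apply: bigcup_measurable => i _; case: (hF i).
have muY j : (mu (Y j) < +oo)%E.
  elim: j => [|j IH].
    have -> : Y 0%N = set0 by apply/seteqP; split => x // [].
    by rewrite measure0 ltry.
  rewrite /Y bigcup_ltS -/(Y j).
  apply: le_lt_trans (measureU2 _ (mY j) (proj1 (hF j))) _.
  by apply: lte_add_pinfty => //; case: (hF j).
have mBY j : measurable (B `&` Y j) by exact: measurableI.
have -> : [set g | c%:E < ev g B]%E =
    \bigcup_j [set g | c%:E < ev g (B `&` Y j)]%E.
  apply/seteqP; split => g /=; last first.
    move=> [j _ /= h]; apply: lt_le_trans h _.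
    by apply: ev_le => //; exact: subIsetl.
  move=> h; apply: contrapT => hj.
  have BY : \bigcup_j (B `&` Y j) = B.
    apply/seteqP; split => x; first by move=> [j _ []].
    move=> Bx; have : [set: X] x by [].
    rewrite FU => -[i _ Fx]; exists i.+1 => //; split => //.
    by exists i => //=.
  have cv := @nondecreasing_cvg_mu _ _ _ (g : meas_type X R) (fun j => B `&` Y j) mBY
    (bigcup_measurable (fun j _ => mBY j)).
  have hom : {homo (fun j => B `&` Y j) : n m / (n <= m)%N >-> (n <= m)%O}.
    move=> n m nm; apply/subsetPset; apply: setIS => x [i /= ilt Fx].
    by exists i => //=; exact: leq_trans ilt nm.
  have cv' : ((fun j => ev g (B `&` Y j)) x @[x --> \oo] --> ev g B).
    by move: (cv hom); rewrite BY.
  have hj' : forall j, (ev g (B `&` Y j) <= c%:E)%E.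
    by move=> j; rewrite leNgt; apply/negP => hh; apply: hj; exists j.
  have hn' : \forall j \near \oo, (ev g (B `&` Y j) <= c%:E)%E by exact: nearW.
  have := lime_le (cvgP _ cv') hn'.
  rewrite (cvg_lim (@ereal_hausdorff R) cv') => /(_ _) hle.
  by move: (lt_le_trans h hle); rewrite ltxx.
apply: good_bigcup => j.
apply: good_gt_fin => //.
by apply: le_lt_trans (muY j); apply: le_measure; rewrite ?inE //; exact: subIsetr.
Qed.

Lemma good_pre B (A : set \bar R) : measurable B -> measurable A ->
  good ((fun g => ev g B) @^-1` A).
Proof.
move=> mB mA.
have sg : sigma_algebra [set: \bar R] [set A | good ((fun g => ev g B) @^-1` A)].
  split.
  - by rewrite /= preimage_set0; exact: good_set0.
  - by move=> A' gA; rewrite /= setTD -preimage_setC; exact: good_C.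
  - by move=> F gF; rewrite /= preimage_bigcup; exact: good_bigcup.
have hG : @ErealGenOInfty.G R `<=` [set A | good ((fun g => ev g B) @^-1` A)].
  move=> _ [r ->] /=.
  have -> : (fun g => ev g B) @^-1` `]r%:E, +oo[%classic = [set g | r%:E < ev g B]%E.
    by apply/seteqP; split => g /=; rewrite in_itv /= andbT.
  exact: good_gt.
change (emeasurable (@ocitv R) A) in mA.
rewrite (@ErealGenOInfty.measurableE R) in mA.
exact: (smallest_sub sg hG mA).
Qed.

Lemma good_gen G : @Bstar_gen d X R G -> good G.
Proof.
move=> [B [a [b [mB a0 ab ->]]]].
have -> : [set g : meas_type X R | (a <= g B <= b)%E] =
    (fun g => ev g B) @^-1` `[a, b]%classic.
  by apply/seteqP; split => g /=; rewrite in_itv.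
apply: good_pre => //; exact: emeasurable_itv.
Qed.

End QF.
Unset Implicit Arguments.
Set Strict Implicit.

Theorem proposition3p1 (R : realType) (d : measure_display)
  (X : measurableType d) (mu : {measure set X -> \bar R}) (T : X -> X)
  (hstd : standard_borel X R)
  (hsf : sigma_finite [set: X] mu)
  (mT : measurable_fun [set: X] T)
  (hmp : measure_preserving mu T)
  (hrig : rigid mu T)
  (xi : probability (Xstar X R) R)
  (hqf : quasi_factor mu mT xi) :
  rigid xi (Tstar mT).
Proof.
have [nk [nkinc hn]] := hrig.
exists nk; split => // E mE _.
have [_ h] := good_all hqf (good_gen hqf hn hsf) mE.
exact: h.
Qed.
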